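(* For every $F\in\mathbb{N}$, the number $\mathrm{nF}(F)$ of reflective numerical semigroups with Frobenius number $F$ satisfies \[ \mathrm{nF}(F)=1-\tau_e(F)+\sum_{k=2}^{F}(-1)^k\left\lfloor \frac{F}{k}\right\rfloor, \] where $\tau_e(F)$ is the number of even positive divisors of $F$.
   Context: A numerical semigroup is a submonoid $S$ of $(\mathbb{N}_0,+)$ with finite complement; its genus is the number of elements of $\mathbb{N}_0\setminus S$ and its Frobenius number is its largest gap. A numerical semigroup $S$ of genus $g\ge1$ is called reflective if for every $z\in\{0,1,\dots,g-1\}$ exactly one of $z$ and $z+g$ belongs to $S$. *)

(* Defs.v *)
From mathcomp Require Import all_boot all_order all_algebra.
From mathcomp Require Import boolp.
Set Implicit Arguments. Unset Strict Implicit. Unset Printing Implicit Defensive.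

Definition numerical_semigroup (S : nat -> bool) : Prop :=
  [/\ S 0, (forall x y, S x -> S y -> S (x + y)) &
      exists N, forall x, N <= x -> S x].

Definition is_frobenius (S : nat -> bool) (F : nat) : Prop :=
  ~~ S F /\ forall x, F < x -> S x.

Definition has_genus (S : nat -> bool) (g : nat) : Prop :=
  exists N, (forall x, N <= x -> S x) /\ g = count (fun x => ~~ S x) (iota 0 N).

Definition reflective (S : nat -> bool) : Prop :=
  numerical_semigroup S /\
  exists g, [/\ has_genus S g, 1 <= g &
             forall z, z < g -> S z != S (z + g)].

(* A set S with all integers > F in S is determined by A = S ∩ {0..F}. *)
Definition sg_of (F : nat) (A : {set 'I_F.+1}) : nat -> bool :=
  fun x => (x < F.+1) ==> [exists i : 'I_F.+1, (val i == x) && (i \in A)].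

(* nF(F): number of reflective numerical semigroups with Frobenius number F,
   counted via their (bijective) encoding by S ∩ {0..F}. *)
Definition nF (F : nat) : nat :=
  #|[set A : {set 'I_F.+1} |
      `[< reflective (sg_of A) /\ is_frobenius (sg_of A) F >]]|.

Definition tau_e (F : nat) : nat :=
  count (fun d => (d %| F) && ~~ odd d) (iota 1 F).

(* Main.v *)
Require Import Defs.
From mathcomp Require Import all_boot all_order all_algebra.
From mathcomp Require Import zify ring boolp.
Import GRing.Theory Num.Theory.
Local Open Scope ring_scope.

Local Open Scope nat_scope.

Definition Sg (m g : nat) (x : nat) : bool :=
  if x < g then m %| x else if x < 2 * g then ~~ (m %| (x - g)) else true.

Lemma count_refl (S : nat -> bool) g :
  (forall z, z < g -> S z != S (z + g)) -> count (fun x => ~~ S x) (iota 0 (2 * g)) = g.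
Proof.
move=> hr.
rewrite (_ : 2 * g = g + g); last by lia.
rewrite iotaD count_cat add0n.
have -> : iota g g = map (addn g) (iota 0 g) by rewrite -iotaDl addn0.
rewrite count_map.
rewrite [count (preim _ _) _](@eq_in_count _ _ S); last first.
  move=> z; rewrite mem_iota add0n => /andP [_ hz] /=.
  by have := hr z hz; rewrite addnC; case: (S z); case: (S (g + z)).
by rewrite addnC -{3}(size_iota 0 g) -(count_predC S).
Qed.

Lemma genus_of (S : nat -> bool) g :
  (forall z, z < g -> S z != S (z + g)) -> (forall x, 2 * g <= x -> S x) -> has_genus S g.
Proof.
move=> hr h2; exists (2 * g); split => //.
by rewrite count_refl.
Qed.

Lemma Sg_ok F m g : 0 < m -> 1 <= g -> (~~ (m %| g) || (g <= m)) -> g <= F -> F < 2 * g ->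
  m %| (F - g) -> (forall y, F - g < y < g -> ~~ (m %| y)) ->
  reflective (Sg m g) /\ is_frobenius (Sg m g) F.
Proof.
move=> m0 g1 hg gF Fg hdF hy.
have hge : forall x, 2 * g <= x -> Sg m g x.
  by move=> x hx; rewrite /Sg ltnNge (leq_trans _ hx) ?ltnNge ?hx //; lia.
split; last first.
  split.
    rewrite /Sg ltnNge gF /= Fg hdF //.
  move=> x hx; rewrite /Sg ltnNge (_ : g <= x); last by lia.
  case: ifP => // h; apply: hy; lia.
split.
  split.
  - by rewrite /Sg (_ : 0 < g) ?dvdn0.
  - move=> x y.
    wlog xy : x y / x <= y.
      move=> W; case: (leqP x y) => h; first exact: W.
      by move=> a b; rewrite addnC; apply: W => //; apply: ltnW.
    rewrite /Sg.
    case: (ltnP y g) => hy'.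
    + have hx : x < g by lia.
      rewrite hx => dx dy; case: ifP => hxy; first by rewrite dvdn_add.
      case: ifP => // hxy2.
      case/orP: hg => hg.
        apply/negP => hd; move/negP: hg; apply.
        by rewrite -(dvdn_subr (n := g) _ (dvdn_add dx dy)) //; lia.
      exfalso.
      have ex : x = 0 by case: (posnP x) => // x0; have := dvdn_leq x0 dx; lia.
      have ey : y = 0 by case: (posnP y) => // y0; have := dvdn_leq y0 dy; lia.
      lia.
    +
      case: (ltnP x g) => hx.
      * case: ifP => hy2 dx ndy; last by apply: hge; lia.
        rewrite ifN; last by lia.
        case: ifP => // _.
        by rewrite (_ : x + y - g = x + (y - g)); [rewrite dvdn_addr | lia].
      * move=> _ _; apply: hge; lia.
  - by exists (2 * g).
exists g; split => //.
  apply: genus_of => // z hz.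
  by rewrite /Sg hz ltnNge leq_addl /= (_ : z + g < 2 * g) ?addnK; [case: (m %| z) | lia].
move=> z hz.
by rewrite /Sg hz ltnNge leq_addl /= (_ : z + g < 2 * g) ?addnK; [case: (m %| z) | lia].
Qed.


Definition cond F m := (2 <= m) && (2 * m <= F) && (0 < F %% (2 * m) < m).
Definition good F m := (m == F) || cond F m.
Definition gF F m := F - m * (F %/ (2 * m)).

Lemma frob_Sg F m g : 0 < m -> m <= g -> 0 < g -> (~~ (m %| g) || (g <= m)) ->
  is_frobenius (Sg m g) F -> good F m /\ g = gF F m.
Proof.
move=> m0 mg g0 hg [nSF hF].
have gF' : g <= F.
  rewrite leqNgt; apply/negP => Fg; have := hF g Fg.
  by rewrite /Sg ltnn (_ : g < 2 * g) ?subnn ?dvdn0 //; lia.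
have Fg : F < 2 * g.
  rewrite ltnNge; apply/negP => h; move: nSF.
  by rewrite /Sg ltnNge gF' /= ltnNge h.
move: nSF; rewrite /Sg ltnNge gF' /= Fg negbK => dr.
have hy : forall y, F - g < y < g -> ~~ (m %| y).
  move=> y /andP [h1 h2]; have := hF (y + g) ltac:(lia).
  by rewrite /Sg ltnNge leq_addl /= (_ : y + g < 2 * g) ?addnK //; lia.
case: (leqP g m) => hgm.
  have mg' : m = g by lia.
  subst m.
  have r0 : F - g = 0.
    case: (posnP (F - g)) => // hp; have := dvdn_leq hp dr; lia.
  have eF : F = g by lia.
  subst F; split; first by rewrite /good eqxx.
  by rewrite /gF divn_small ?muln0 ?subn0 //; lia.
have ndg : ~~ (m %| g) by move: hg; rewrite leqNgt hgm orbF.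
case/dvdnP: dr => q eq.
have q1 : 0 < q.
  case: (posnP q) => // q0; subst q.
  have := hy m ltac:(lia); by rewrite dvdnn.
have hmq : m <= q * m by rewrite leq_pmull.
have g2 : g < q * m + m.
  rewrite ltn_neqAle; apply/andP; split.
    by apply/negP => /eqP e; move/negP: ndg; apply; rewrite e (_ : q * m + m = q.+1 * m) ?dvdn_mull ?dvdnn //; lia.
  rewrite leqNgt; apply/negP => h.
  by have := hy (q * m + m) ltac:(lia); rewrite (_ : q * m + m = q.+1 * m) ?dvdn_mull ?dvdnn //; lia.
have eF : F = q * (2 * m) + (g - q * m) by lia.
have hd : F %/ (2 * m) = q.
  by rewrite eF divnMDl ?divn_small; lia.
have hmod : F %% (2 * m) = g - q * m.
  by rewrite eF modnMDl modn_small; lia.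
split; last by rewrite /gF hd; lia.
apply/orP; right; rewrite /cond hmod.
have -> : 2 <= m.
  case: (ltnP 1 m) => // h1; have e1 : m = 1 by lia.
  by move: ndg; rewrite e1 dvd1n.
have -> : 2 * m <= F by lia.
apply/andP; split; lia.
Qed.

Lemma mult_closed (S : nat -> bool) m : S 0 -> (forall x y, S x -> S y -> S (x + y)) ->
  S m -> forall k, S (k * m).
Proof. move=> S0 Sadd Sm; elim=> [|k IH]; by rewrite ?mul0n // mulSn Sadd. Qed.

Lemma forward_shape (S : nat -> bool) : reflective S ->
  exists m g, [/\ 0 < m, m <= g, 0 < g, ~~ (m %| g) || (g <= m) & forall x, S x = Sg m g x].
Proof.
move=> [[S0 Sadd [N HN]] [g [[N' [HN' Hcount]] g1 Hr]]].
have big : forall x, 2 * g <= x -> S x.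
  move=> x hx; apply/negPn/negP => nSx.
  have xN : x < N' by rewrite ltnNge; apply/negP => h; move/negP: nSx; apply; exact: HN'.
  have := @count_refl S g Hr.
  have e : iota 0 N' = iota 0 (2 * g) ++ iota (2 * g) (N' - 2 * g).
    by rewrite -iotaD; congr iota; lia.
  rewrite e count_cat in Hcount.
  have : 0 < count (fun x => ~~ S x) (iota (2 * g) (N' - 2 * g)).
    rewrite -has_count; apply/hasP; exists x => //; rewrite mem_iota; lia.
  lia.
have nSg : ~~ S g by have := Hr 0 g1; rewrite S0 add0n; case: (S g).
have per : forall a y, S a -> y + a < g -> S y = S (y + a).
  move=> a y Sa hya; case Sy: (S y); first by rewrite Sadd.
  have Syg : S (y + g) by have := Hr y ltac:(lia); rewrite Sy; case: (S (y + g)).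
  have := Hr (y + a) hya.
  rewrite (_ : y + a + g = y + g + a); last by lia.
  by rewrite (Sadd _ _ Syg Sa); case: (S (y + a)).
have [m [m0 mg hg Hm]] : exists m, [/\ 0 < m, m <= g, ~~ (m %| g) || (g <= m)
                                   & forall x, x < g -> S x = (m %| x)].
  case: (boolP [exists a : 'I_g, (0 < a) && S a]) => [ex|nex].
    have ex' : exists a, (0 < a < g) && S a.
      case/existsP: ex => b /andP [b0 Sb]; exists b; by rewrite b0 ltn_ord Sb.
    case: (ex_minnP ex') => m /andP [/andP [m0 mg] Sm] mmin.
    have Hm : forall x, x < g -> S x = (m %| x).
      elim/ltn_ind => x IH hx.
      case: (ltnP x m) => hxm.
        case: (posnP x) => [->|x0]; first by rewrite S0 dvdn0.
        have -> : m %| x = false by apply/negbTE/negP => d; have := dvdn_leq x0 d; lia.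
        apply/negbTE/negP => Sx; have := mmin x; rewrite x0 hx Sx /=; lia.
      rewrite (_ : x = (x - m) + m); last by lia.
      rewrite -per //; last by lia.
      rewrite IH; try lia.
      by rewrite (dvdn_subl hxm (dvdnn m)) subnK.
    exists m; split => //; try lia.
    apply/orP; left; apply/negP => d.
    case/dvdnP: d => k ek.
    by move/negP: nSg; apply; rewrite ek mult_closed.
  exists g; split => //; first by rewrite leqnn orbT.
  move=> x hx; case: (posnP x) => [->|x0]; first by rewrite S0 dvdn0.
  have -> : g %| x = false by apply/negbTE/negP => d; have := dvdn_leq x0 d; lia.
  apply/negbTE/negP => Sx; move/negP: nex; apply; apply/existsP.
  by exists (Ordinal hx); rewrite /= x0 Sx.
exists m, g; split => // x.
rewrite /Sg; case: ifP => hx; first exact: Hm.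
case: ifP => hx2; last by apply: big; lia.
have := Hr (x - g) ltac:(lia).
rewrite Hm; last by lia.
rewrite subnK; last by lia.
by case: (m %| x - g); case: (S x).
Qed.


Lemma ndvd_between m q y : 0 < m -> m * q < y -> y < m * q + m -> ~~ (m %| y).
Proof.
move=> m0 h1 h2; apply/negP => /dvdnP [k ek]; subst y.
have : q < k by rewrite -(ltn_pmul2l m0) [m * k]mulnC.
have : k < q.+1 by rewrite -(ltn_pmul2l m0) mulnS [m * k]mulnC; lia.
lia.
Qed.

Lemma good_ok F m : 0 < F -> good F m ->
  [/\ 0 < m, m <= gF F m, gF F m <= F, (cond F m -> m < gF F m)
    & reflective (Sg m (gF F m)) /\ is_frobenius (Sg m (gF F m)) F].
Proof.
move=> F0; case/orP => [/eqP ->|c].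
  have e : gF F F = F by rewrite /gF divn_small ?muln0 ?subn0 //; lia.
  rewrite e; split => //.
    by rewrite /cond; lia.
  apply: Sg_ok => //; try lia.
  - by rewrite subnn dvdn0.
  - move=> y /andP [y0 yF]; apply/negP => d; have := dvdn_leq _ d; lia.
move: (c); rewrite /cond => /andP [/andP [m2 m2F] /andP [r0 rm]].
have m0 : 0 < 2 * m by lia.
have hF := divn_eq F (2 * m).
set q := F %/ (2 * m) in hF *; set r := F %% (2 * m) in hF r0 rm *.
have q1 : 0 < q.
  rewrite lt0n; apply/eqP => q0; move: hF; rewrite q0; lia.
have hmq : m <= m * q by rewrite leq_pmulr.
have eg : gF F m = m * q + r by rewrite /gF -/q; lia.
rewrite eg; split => //; try lia.
apply: Sg_ok; try lia.
- by rewrite (@ndvd_between m q _) //; lia.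
- by rewrite (_ : F - (m * q + r) = m * q) ?dvdn_mulr //; lia.
- move=> y /andP [h1 h2]; apply: (@ndvd_between m q _); lia.
Qed.

Lemma card_good F : 0 < F ->
  #|[set m : 'I_F.+1 | good F m]| = 1 + \sum_(1 <= m < F.+1) cond F m.
Proof.
move=> F0.
rewrite -sum1_card big_mkcond /=.
rewrite (eq_bigr (fun i : 'I_F.+1 => if good F i then 1 else 0)); last by move=> i _; rewrite inE.
rewrite -(big_mkord xpredT (fun i => if good F i then 1 else 0)).
rewrite big_ltn // /good /cond /= (_ : (0 == F) = false); last by apply/negbTE; lia.
rewrite add0n big_nat_recr //= eqxx /=.
rewrite [in RHS]big_nat_recr //=.
rewrite (_ : 2 * F <= F = false); last by apply/negbTE; lia.
rewrite andbF addn0 addnC; congr (_ + _).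
apply: eq_big_nat => i /andP [h1 h2].
by rewrite (_ : (i == F) = false) //; apply/negbTE; lia.
Qed.

Lemma sg_of_mem F (A : {set 'I_F.+1}) (i : 'I_F.+1) : (i \in A) = sg_of A i.
Proof.
rewrite /sg_of ltn_ord /=; apply/idP/existsP => [h|[j /andP [/eqP e hj]]].
  by exists i; rewrite eqxx h.
by rewrite (_ : i = j) //; apply/val_inj.
Qed.

Lemma nF_count F : 0 < F -> nF F = #|[set m : 'I_F.+1 | good F m]|.
Proof.
move=> F0.
pose Tm := fun m : 'I_F.+1 => [set i : 'I_F.+1 | Sg m (gF F m) i].
have sgT : forall m : 'I_F.+1, good F m -> sg_of (Tm m) = Sg m (gF F m).
  move=> m gm; apply: funext => x.
  rewrite /sg_of; case: (ltnP x F.+1) => hx /=.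
    apply/existsP/idP => [[j /andP [/eqP <- ]]|h]; first by rewrite inE.
    by exists (Ordinal hx); rewrite /= eqxx inE.
  have [_ _ _ _ [_ [_ hf]]] := @good_ok F _ F0 gm; symmetry; apply: hf; lia.
rewrite /nF.
have -> : [set A : {set 'I_F.+1} | `[< reflective (sg_of A) /\ is_frobenius (sg_of A) F >]]
          = Tm @: [set m : 'I_F.+1 | good F m].
  apply/setP => A; rewrite inE; apply/asboolP/imsetP.
    move=> [hr hf]; have [m [g [m0 mg g0 hg eS]]] := @forward_shape _ hr.
    have eS' : sg_of A = Sg m g := funext eS.
    rewrite eS' in hf; have [gm eg] := @frob_Sg F m g m0 mg g0 hg hf.
    have mF : m < F.+1 by have := leq_subr (m * (F %/ (2 * m))) F; rewrite -/(gF F m) -eg; lia.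
    exists (Ordinal mF); first by rewrite inE.
    by apply/setP => i; rewrite sg_of_mem inE /= eS' eg.
  move=> [m]; rewrite inE => gm ->.
  rewrite sgT //; by have [_ _ _ _ ?] := @good_ok F _ F0 gm.
rewrite card_in_imset //.
have key : forall m1 m2 : 'I_F.+1, good F m1 -> good F m2 -> m1 < m2 -> Tm m1 != Tm m2.
  move=> m1 m2 g1 g2 lt; apply/negP => /eqP e.
  move/setP: e => /(_ m1); rewrite /Tm !inE /=.
  have [a1 b1 c1 d1 _] := @good_ok F _ F0 g1.
  have [a2 b2 c2 d2 _] := @good_ok F _ F0 g2.
  have cm1 : cond F m1.
    move: g1; rewrite /good (_ : (nat_of_ord m1 == F) = false) //; apply/negbTE.
    have := ltn_ord m2; lia.
  have := d1 cm1 => h1.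
  rewrite /Sg h1 dvdnn (_ : m1 < gF F m2); last by lia.
  have -> : (m2 %| m1) = false by apply/negbTE/negP => d; have := dvdn_leq a1 d; lia.
  by [].
move=> m1 m2; rewrite !inE => g1 g2 e.
case: (ltngtP m1 m2) => h.
- by move/negP: (key _ _ g1 g2 h); rewrite e.
- by move/negP: (key _ _ g2 g1 h); rewrite e.
- exact: val_inj.
Qed.

Lemma cond_ind (F m : nat) : 1 <= m -> m <= F ->
  ((2 <= m) && (2 * m <= F) && (0 < F %% (2 * m) < m)) + (2 * m %| F) + F %/ m = 1 + 2 * (F %/ (2 * m)).
Proof.
move=> h1 h2.
have m0 : 0 < 2 * m by lia.
have hF := divn_eq F (2 * m); have hr := ltn_pmod F m0.
set q := F %/ (2 * m) in hF *; set r := F %% (2 * m) in hF hr *.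
have hdiv : F %/ m = 2 * q + (m <= r).
  rewrite hF (_ : q * (2 * m) = (2*q) * m); last by lia.
  rewrite divnMDl; last by lia.
  case: (leqP m r) => hmr.
    rewrite (_ : r = 1 * m + (r - m)); last by lia.
    by rewrite divnMDl ?divn_small; lia.
  by rewrite divn_small.
have hd : (2 * m %| F) = (r == 0) by rewrite /dvdn.
rewrite hdiv hd.
case: (posnP r) => [->|rp] /=; first by rewrite leqn0 (negbTE (_ : m != 0)) ?andbF; lia.
case: (leqP m r) => hmr /=; first by rewrite andbF; lia.
rewrite andbT.
have -> : 2 <= m by lia.
have qp : 0 < q by rewrite lt0n; apply/eqP => q0; move: hF; rewrite q0; lia.
have hh := leq_pmull (2 * m) qp.
have hh2 : 2 * m <= F by rewrite hF; exact: (leq_trans hh (leq_addr _ _)).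
rewrite hh2.
rewrite /=; lia. Qed.

Local Open Scope ring_scope.
Lemma Posz_sum m n (f : nat -> nat) :
  (\sum_(m <= i < n) f i)%N%:Z = \sum_(m <= i < n) (f i)%:Z.
Proof. exact: (big_morph Posz PoszD (erefl _)). Qed.

Lemma even_sum (f : nat -> int) N :
  \sum_(0 <= k < (2 * N)%N) (if odd k then 0 else f k) = \sum_(0 <= m < N) f (2 * m)%N.
Proof.
elim: N => [|N IH]; first by rewrite !big_geq.
rewrite (_ : (2 * N.+1 = (2 * N).+1.+1)%N); last by lia.
rewrite big_nat_recr //= big_nat_recr //= IH big_nat_recr //=.
by rewrite oddM /= addr0.
Qed.

Lemma even_sum_ext (f : nat -> int) F :
  f 0%N = 0 -> (forall k, (F < k)%N -> f k = 0) ->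
  \sum_(1 <= k < F.+1) (if odd k then 0 else f k) = \sum_(1 <= m < F.+1) f (2 * m)%N.
Proof.
move=> f0 fF.
have e1 : \sum_(0 <= k < (2 * F.+1)%N) (if odd k then 0 else f k) =
   \sum_(0 <= k < 1) (if odd k then 0 else f k) + \sum_(1 <= k < F.+1) (if odd k then 0 else f k)
   + \sum_(F.+1 <= k < (2 * F.+1)%N) (if odd k then 0 else f k).
  rewrite -big_cat_nat // -big_cat_nat //; lia.
rewrite big_nat1 /= f0 add0r in e1.
rewrite [X in _ + X]big1_seq ?addr0 in e1; last first.
  move=> i /andP [_]; rewrite mem_index_iota => /andP [hi _]; by rewrite fF ?if_same.
rewrite -e1 even_sum big_ltn // muln0 f0 add0r.
by [].
Qed.



Lemma cond_int F m : (1 <= m)%N -> (m <= F)%N ->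
  ((cond F m : nat) : int) = 1 + 2 * (F %/ (2 * m))%:Z - ((2 * m %| F)%N : nat)%:Z - (F %/ m)%:Z.
Proof. move=> h1 h2; have := cond_ind F m h1 h2; rewrite /cond; lia. Qed.

Lemma tau_sum F : (1 <= F)%N -> (tau_e F)%:Z = \sum_(1 <= m < F.+1) ((2 * m %| F)%N : nat)%:Z.
Proof.
move=> hF.
have -> : tau_e F = (\sum_(1 <= k < F.+1) ((k %| F) && ~~ odd k : nat))%N.
  rewrite /tau_e -sum1_count big_mkcond /= /index_iota subn1.
  by apply: eq_bigr => i _; case: ifP.
rewrite Posz_sum.
rewrite -(even_sum_ext (fun k => ((k %| F)%N : nat)%:Z)).
- apply: eq_bigr => i _; by case: (odd i); rewrite ?andbF ?andbT.
- by rewrite dvd0n; case: F hF.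
- move=> k hk; case h: (k %| F)%N => //; have := dvdn_leq hF h; lia.
Qed.

Lemma alt_sum F : (1 <= F)%N ->
  \sum_(2 <= k < F.+1) (-1) ^+ k * (F %/ k)%:Z =
  F%:Z - \sum_(1 <= m < F.+1) (F %/ m)%:Z + 2 * \sum_(1 <= m < F.+1) (F %/ (2 * m))%:Z.
Proof.
move=> hF.
have e : \sum_(1 <= k < F.+1) (-1) ^+ k * (F %/ k)%:Z =
   2 * \sum_(1 <= k < F.+1) (if odd k then 0 else (F %/ k)%:Z) - \sum_(1 <= m < F.+1) (F %/ m)%:Z.
  rewrite mulr_sumr -sumrB; apply: eq_bigr => i _.
  rewrite -signr_odd; case: (odd i) => /=; rewrite ?expr1 ?expr0; lia.
rewrite (even_sum_ext (fun k => (F %/ k)%:Z)) ?divn0 // in e; last first.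
  by move=> k hk; rewrite divn_small.
rewrite big_ltn // expr1 divn1 in e.
move: e; set a := \sum_(2 <= _ < _) _; set b := \sum_(1 <= _ < _) _; set c := \sum_(1 <= _ < _) _. rewrite mulN1r. move=> e. rewrite -[a](addKr (- (F:int))) e; ring.
Qed.

Lemma nt_identity F : (1 <= F)%N ->
  (\sum_(1 <= m < F.+1) cond F m)%N%:Z = - (tau_e F)%:Z + \sum_(2 <= k < F.+1) (-1) ^+ k * (F %/ k)%:Z.
Proof.
move=> hF; rewrite alt_sum // tau_sum // Posz_sum.
rewrite (eq_big_nat _ _ (F2 := fun m => 1 + 2 * (F %/ (2 * m))%:Z - ((2 * m %| F)%N : nat)%:Z - (F %/ m)%:Z)); last first.
  move=> i /andP [h1 h2]; apply: cond_int => //; lia.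
rewrite !big_split /= !sumrN -mulr_sumr.
rewrite sumr_const_nat subSS subn0.
have -> : (1 *+ F : int) = F%:Z by rewrite -natz.
ring.
Qed.

Theorem mainTheorem19 (F : nat) (hF : (1 <= F)%N) :
  (nF F)%:Z = 1 - (tau_e F)%:Z
              + \sum_(2 <= k < F.+1) (-1) ^+ k * (F %/ k)%:Z.
Proof.
rewrite nF_count // card_good // PoszD nt_identity //.
ring.
Qed.
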